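(* Let $D_4(s,t) = 3s^2t^2$, $D_5(s,t) = s^4t + 4s^2t^3$, and $D_n(s,t) = t\,D_{n-1}(s,t) + s^2 D_{n-2}(s,t)$ for $n > 5$. For every integer $n \geq 4$ there exists $\epsilon(n) > 0$ such that for all real $s,t$ with $t>0$ and $t \leq s \leq t(1+\epsilon(n))$, the maximum of $|\det A|$ over all $A \in \mathcal{G}_s^{n\times n}([0,t])$ equals $D_n(s,t)$.
   Context: For a real number $s$, a positive integer $n$ and a set $P \subseteq \mathbb{R}$, $\mathcal{G}_s^{n\times n}(P)$ denotes the set of all $n\times n$ real upper Hessenberg matrices $A=(a_{ij})$ with $a_{i+1,i} = s$ for $1\le i\le n-1$, $a_{ij}=0$ for $i > j+1$, and $a_{ij}\in P$ for all $i \le j$. *)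

(* Defs.v *)
From HB Require Import structures.
From mathcomp Require Import all_boot all_order all_algebra.
From mathcomp Require Import reals.
Set Implicit Arguments. Unset Strict Implicit. Unset Printing Implicit Defensive.
Import Order.TTheory GRing.Theory Num.Theory.
Local Open Scope ring_scope.

Fixpoint Dn {R : ringType} (n : nat) (s t : R) : R :=
  match n with
  | 4 => 3 * s ^+ 2 * t ^+ 2
  | 5 => s ^+ 4 * t + 4 * s ^+ 2 * t ^+ 3
  | (k.+1 as m).+1 =>
      if (5 < n)%N then t * Dn m s t + s ^+ 2 * Dn k s t else 0
  | _ => 0
  end.

(* A is in G_s^{n x n}(P): upper Hessenberg, subdiagonal entries equal to s,
   zero below the subdiagonal, entries on/above the diagonal in P.
   Indices are 0-based ordinals: a_{i+1,i} corresponds to (i.+1, i). *)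
Definition in_Gs {R : ringType} (n : nat) (s : R) (P : pred R)
    (A : 'M[R]_n) : Prop :=
  forall i j : 'I_n,
    (i = j.+1 :> nat -> A i j = s) /\
    ((j.+1 < i)%N -> A i j = 0) /\
    ((i <= j)%N -> P (A i j)).

(* Main.v *)
Require Import Defs.
From HB Require Import structures.
From mathcomp Require Import all_boot all_order all_algebra.
From mathcomp Require Import reals ring lra.
Import Order.TTheory GRing.Theory Num.Theory.
Local Open Scope ring_scope.
Set Implicit Arguments. Unset Strict Implicit. Unset Printing Implicit Defensive.



Fixpoint xs {R : realFieldType} (s t : R) (j : nat) : R * R :=
  match j with
  | 0 => (t ^+ 2 / s, s * t)
  | j'.+1 => let pr := xs s t j' in (pr.2, t * pr.2 + s ^+ 2 * pr.1)
  end.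
Definition xx {R : realFieldType} (s t : R) j := (xs s t j).1.
Arguments xx : simpl never.

Lemma xx0 (R : realFieldType) (s t : R) : xx s t 0 = t ^+ 2 / s. Proof. by []. Qed.
Lemma xx1 (R : realFieldType) (s t : R) : xx s t 1 = s * t. Proof. by []. Qed.
Lemma xxSS (R : realFieldType) (s t : R) j :
  xx s t j.+2 = t * xx s t j.+1 + s ^+ 2 * xx s t j.
Proof. by []. Qed.

Lemma xinv (R : realFieldType) (s t : R) : 0 < t -> t <= s -> s ^+ 2 <= 2 * t ^+ 2 ->
  forall j, [/\ 0 < xx s t j, s ^+ 2 * xx s t j <= t * xx s t j.+1
             & xx s t j.+1 <= 2 * t * xx s t j].
Proof.
move=> ht hts hs2; have hs : 0 < s by apply: lt_le_trans hts.
elim=> [|j [h0 h1 h2]].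
  rewrite xx0 xx1; split.
  - by rewrite divr_gt0 // exprn_gt0.
  - by rewrite le_eqVlt; apply/orP; left; apply/eqP; field; rewrite gt_eqF.
  - rewrite -subr_ge0.
    have -> : 2 * t * (t ^+ 2 / s) - s * t = t * (2 * t ^+ 2 - s ^+ 2) / s.
      by field; rewrite gt_eqF.
    by apply: divr_ge0; [apply: mulr_ge0; [apply: ltW | rewrite subr_ge0] | apply: ltW].
have hx1 : 0 < xx s t j.+1.
  have : 0 < t * xx s t j.+1.
    apply: lt_le_trans h1; rewrite mulr_gt0 // exprn_gt0 //.
  by rewrite pmulr_rgt0.
split => //.
- rewrite xxSS; nra.
- rewrite xxSS; nra.
Qed.

Definition dot {R : realFieldType} (f : R * R) (u v : R) := f.1 * u + f.2 * v.

Fixpoint mx {R : realFieldType} (L : seq (R * R)) (u v : R) : R :=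
  match L with
  | [::] => 0
  | f :: L' => Num.max (dot f u v) (mx L' u v)
  end.

Lemma mx_ge (R : realFieldType) (L : seq (R * R)) u v f :
  f \in L -> dot f u v <= mx L u v.
Proof.
elim: L => [//|g L IH]; rewrite inE /= => /orP [/eqP->|/IH h].
  by rewrite le_max lexx.
by rewrite le_max h orbT.
Qed.

Lemma mx_le (R : realFieldType) (L : seq (R * R)) u v c :
  0 <= c -> (forall f, f \in L -> dot f u v <= c) -> mx L u v <= c.
Proof.
move=> hc; elim: L => [//|g L IH] H /=.
rewrite ge_max H ?inE ?eqxx //= IH // => f hf; apply: H; by rewrite inE hf orbT.
Qed.

Definition forms {R : realFieldType} (s t : R) (m : nat) : seq (R * R) :=
  match m with
  | 0 => [:: (t, 0)]
  | 1 => [:: (s * t, t ^+ 2)]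
  | 2 => [:: (s ^+ 2 * t, 2 * s * t ^+ 2); (s ^+ 2 * t + t ^+ 3, s * t ^+ 2)]
  | j.+3 =>
     let p := xx s t j in let q := xx s t j.+1 in let r := xx s t j.+2 in
     [:: (s ^+ 2 * q, t * s * q + s * r); (s * r, t * r + s ^+ 2 * q);
         (t * s ^+ 2 * p + s ^+ 2 * q, t ^+ 2 * s * p + t * s * q + s ^+ 3 * p)]
  end.

Definition Psi {R : realFieldType} (s t : R) m u v :=
  Num.max (mx (forms s t m) u v) (mx (forms s t m) v u).

Lemma PsiC (R : realFieldType) (s t : R) m u v : Psi s t m u v = Psi s t m v u.
Proof. by rewrite /Psi maxC. Qed.

Lemma Psi_ge_l (R : realFieldType) (s t : R) m u v g X :
  g \in forms s t m -> X <= dot g u v -> X <= Psi s t m u v.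
Proof. move=> hg hX; apply: (le_trans hX); rewrite le_max mx_ge //. Qed.

Lemma Psi_ge_r (R : realFieldType) (s t : R) m u v g X :
  g \in forms s t m -> X <= dot g v u -> X <= Psi s t m u v.
Proof. move=> hg hX; apply: (le_trans hX); rewrite le_max (mx_ge _ _ hg) orbT //. Qed.

Lemma Psi_le (R : realFieldType) (s t : R) m u v c : 0 <= c ->
  (forall f, f \in forms s t m -> dot f u v <= c /\ dot f v u <= c) ->
  Psi s t m u v <= c.
Proof.
move=> hc H; rewrite /Psi ge_max !mx_le // => f hf; by case: (H f hf).
Qed.

Lemma domA (R : realFieldType) (s t : R) (f g : R * R) u v : 0 <= u -> 0 <= v ->
  s * f.1 <= g.1 -> t * f.1 + s * f.2 <= g.2 ->
  dot f (s * u + t * v) (s * v) <= dot g u v.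
Proof.
move=> hu hv h1 h2; rewrite /dot.
have -> : f.1 * (s * u + t * v) + f.2 * (s * v) = (s * f.1) * u + (t * f.1 + s * f.2) * v by ring.
by apply: lerD; apply: ler_wpM2r.
Qed.

Lemma domA' (R : realFieldType) (s t : R) (f g : R * R) u v : 0 <= u -> 0 <= v ->
  s * f.2 <= g.1 -> s * f.1 + t * f.2 <= g.2 ->
  dot f (s * v) (s * u + t * v) <= dot g u v.
Proof.
move=> hu hv h1 h2; rewrite /dot.
have -> : f.1 * (s * v) + f.2 * (s * u + t * v) = (s * f.2) * u + (s * f.1 + t * f.2) * v by ring.
by apply: lerD; apply: ler_wpM2r.
Qed.

Lemma dotC (R : realFieldType) (f : R * R) u v : dot f v u = dot (f.2, f.1) u v.
Proof. by rewrite /dot /= addrC. Qed.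

Lemma mx_ge0 (R : realFieldType) (L : seq (R * R)) u v : 0 <= mx L u v.
Proof. elim: L => [//|g L IH] /=; by rewrite le_max IH orbT. Qed.

Lemma Psi_ge0 (R : realFieldType) (s t : R) m u v : 0 <= Psi s t m u v.
Proof. by rewrite /Psi le_max mx_ge0. Qed.

Definition Hyp {R : realFieldType} (s t : R) :=
  [/\ 0 < t, t <= s, s ^+ 2 <= 2 * t ^+ 2 & 0 <= t ^+ 3 - t ^+ 2 * s + 2 * t * s ^+ 2 - s ^+ 3].

Lemma Psi_stepA (R : realFieldType) (s t : R) m u v : Hyp s t -> 0 <= u -> 0 <= v ->
  Psi s t m (s * u + t * v) (s * v) <= Psi s t m.+1 u v.
Proof.
move=> [ht hts hs2 hc] hu hv; have hs : 0 < s by apply: lt_le_trans hts.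
apply: Psi_le; first exact: Psi_ge0.
case: m => [|[|[|j]]] f.
- rewrite inE => /eqP ->; split.
    apply: (@Psi_ge_l _ _ _ _ _ _ (s * t, t ^+ 2)); first by rewrite inE.
    apply: domA => //=; nra.
  apply: (@Psi_ge_r _ _ _ _ _ _ (s * t, t ^+ 2)); first by rewrite inE.
  rewrite [X in _ <= X]dotC; apply: domA' => //=; nra.
- rewrite inE => /eqP ->; split.
    apply: (@Psi_ge_l _ _ _ _ _ _ (s ^+ 2 * t, 2 * s * t ^+ 2)); first by rewrite !inE eqxx.
    apply: domA => //=; nra.
  apply: (@Psi_ge_r _ _ _ _ _ _ (s ^+ 2 * t + t ^+ 3, s * t ^+ 2)); first by rewrite !inE eqxx orbT.
  rewrite [X in _ <= X]dotC; apply: domA' => //=; nra.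
- set x2 := xx s t 2.
  have ex2 : x2 = 2 * s * t ^+ 2 by rewrite /x2 xxSS xx0 xx1; field; rewrite gt_eqF.
  have ex3 : s ^+ 2 * xx s t 0 = s * t ^+ 2 by rewrite xx0; field; rewrite gt_eqF.
  have ex4 : t ^+ 2 * s * xx s t 0 = t ^+ 4 by rewrite xx0; field; rewrite gt_eqF.
  have ex5 : s ^+ 3 * xx s t 0 = s ^+ 2 * t ^+ 2 by rewrite xx0; field; rewrite gt_eqF.
  rewrite !inE => /orP [/eqP ->|/eqP ->]; split.
  + apply: (@Psi_ge_l _ _ _ _ _ _ (nth 0 (forms s t 3) 0)); first by rewrite mem_nth.
    apply: domA => //=; rewrite ?ex2 ?xx1; nra.
  + apply: (@Psi_ge_l _ _ _ _ _ _ (nth 0 (forms s t 3) 1)); first by rewrite mem_nth.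
    apply: domA' => //=; rewrite ?ex2 ?xx1; nra.
  + apply: (@Psi_ge_l _ _ _ _ _ _ (nth 0 (forms s t 3) 2)); first by rewrite mem_nth.
    apply: domA => //=; rewrite ?xx1 -?mulrA ?ex3 ?ex4 ?ex5; nra.
  + apply: (@Psi_ge_l _ _ _ _ _ _ (nth 0 (forms s t 3) 1)); first by rewrite mem_nth.
    apply: domA' => //=; rewrite ?ex2 ?xx1; nra.
- have [hp h1 h2] := xinv ht hts hs2 j.
  have [hq h3 h4] := xinv ht hts hs2 j.+1.
  set p := xx s t j in hp h1 h2 *; set q := xx s t j.+1 in hq h1 h2 h3 h4 *.
  set r := xx s t j.+2 in h3 h4 *.
  have er3 : xx s t j.+3 = t * r + s ^+ 2 * q by rewrite xxSS.
  have er : r = t * q + s ^+ 2 * p by rewrite /r xxSS.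
  have [hr _ _] := xinv ht hts hs2 j.+2; rewrite -/r in hr.
  have h2' : 0 <= t * (t * r - s ^+ 2 * q) by apply: mulr_ge0; [apply: ltW|rewrite subr_ge0].
  have h1' : 0 <= t ^+ 2 * (t * q - s ^+ 2 * p) by apply: mulr_ge0; [apply: ltW; rewrite exprn_gt0|rewrite subr_ge0].
  have hsp : s * p <= q.
    have : t * (s * p) <= t * q.
      apply: le_trans h1; rewrite mulrA (mulrC t) expr2 -mulrA.
      by rewrite -mulrA ler_wpM2l ?ler_wpM2r // ltW.
    by rewrite ler_pM2l.
  have h3' : 0 <= (t ^+ 3 - t ^+ 2 * s + 2 * t * s ^+ 2 - s ^+ 3) * (q - s * p) by apply: mulr_ge0; rewrite // subr_ge0.
  have h4' : 0 <= s * (s ^+ 2 - s * t + t ^+ 2) * (q - s * p).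
    apply: mulr_ge0; last by rewrite subr_ge0.
    apply: mulr_ge0; first exact: ltW. nra.
  have hstr : 0 <= s * t * r by rewrite !mulr_ge0 // ltW.
  rewrite /= !inE => /or3P [] /eqP ->; split.
  + apply: (@Psi_ge_l _ _ _ _ _ _ (nth 0 (forms s t j.+4) 1)); first by rewrite mem_nth.
    apply: domA => //=; rewrite -?/q -?/r ?er3; nra.
  + apply: (@Psi_ge_l _ _ _ _ _ _ (nth 0 (forms s t j.+4) 2)); first by rewrite mem_nth.
    apply: domA' => //=; rewrite -?/q -?/r; nra.
  + apply: (@Psi_ge_l _ _ _ _ _ _ (nth 0 (forms s t j.+4) 0)); first by rewrite mem_nth.
    apply: domA => //=; rewrite -?/q -?/r ?er3; nra.
  + apply: (@Psi_ge_l _ _ _ _ _ _ (nth 0 (forms s t j.+4) 1)); first by rewrite mem_nth.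
    apply: domA' => //=; rewrite -?/q -?/r ?er3; nra.
  + apply: (@Psi_ge_l _ _ _ _ _ _ (nth 0 (forms s t j.+4) 1)); first by rewrite mem_nth.
    apply: domA => //=; rewrite -?/q -?/r ?er3 ?er; nra.
  + apply: (@Psi_ge_l _ _ _ _ _ _ (nth 0 (forms s t j.+4) 1)); first by rewrite mem_nth.
    apply: domA' => //=; rewrite -?/q -?/r ?er3 ?er; nra.
Qed.

Lemma Psi_stepB (R : realFieldType) (s t : R) m u v : Hyp s t -> 0 <= u -> 0 <= v ->
  Psi s t m (s * u) (s * v + t * u) <= Psi s t m.+1 u v.
Proof.
move=> H hu hv; rewrite PsiC (PsiC _ _ m.+1); exact: Psi_stepA.
Qed.

Lemma le_of_eq (R : realFieldType) (x y : R) : x = y -> x <= y.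
Proof. by move->. Qed.

Definition Mx {R : realFieldType} (s t : R) m u v :=
  Num.max (Psi s t m (s * u + t * v) (s * v)) (Psi s t m (s * u) (s * v + t * u)).

Lemma MxC (R : realFieldType) (s t : R) m u v : Mx s t m u v = Mx s t m v u.
Proof. by rewrite /Mx maxC; congr Num.max; apply: PsiC. Qed.

Lemma Mx_half (R : realFieldType) (s t : R) m u v g : 0 < s ->
  g \in forms s t m.+1 -> dot g u v <= Mx s t m u v.
Proof.
move=> hs hg; have hs0 : s != 0 by rewrite gt_eqF.
have LA : forall f, f \in forms s t m -> dot g u v = dot f (s * u + t * v) (s * v) ->
    dot g u v <= Mx s t m u v.
  move=> f hf e; rewrite le_max; apply/orP; left; apply: Psi_ge_l hf _; exact: le_of_eq.
have LA' : forall f, f \in forms s t m -> dot g u v = dot f (s * v) (s * u + t * v) ->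
    dot g u v <= Mx s t m u v.
  move=> f hf e; rewrite le_max; apply/orP; left; apply: Psi_ge_r hf _; exact: le_of_eq.
have LB : forall f, f \in forms s t m -> dot g u v = dot f (s * u) (s * v + t * u) ->
    dot g u v <= Mx s t m u v.
  move=> f hf e; rewrite le_max; apply/orP; right; apply: Psi_ge_l hf _; exact: le_of_eq.
case: m hg LA LA' LB => [|[|[|j]]] hg LA LA' LB.
- move: hg; rewrite inE => /eqP ?; subst g; apply: (LA (t, 0)); first by rewrite inE.
  rewrite /dot /=; ring.
- move: hg; rewrite !inE => /orP [/eqP ?|/eqP ?]; subst g.
    apply: (LA (s * t, t ^+ 2)); first by rewrite inE. rewrite /dot /=; ring.
  apply: (LB (s * t, t ^+ 2)); first by rewrite inE. rewrite /dot /=; ring.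
- have ex2 : xx s t 2 = 2 * s * t ^+ 2 by rewrite xxSS xx0 xx1; field.
  move: hg; rewrite /= !inE => /or3P [] /eqP ?; subst g.
  + apply: (LA (s ^+ 2 * t, 2 * s * t ^+ 2)); first by rewrite !inE eqxx.
    rewrite /dot /= ex2 xx1; ring.
  + apply: (LA' (s ^+ 2 * t, 2 * s * t ^+ 2)); first by rewrite !inE eqxx.
    rewrite /dot /= ex2 xx1; ring.
  + apply: (LA (s ^+ 2 * t + t ^+ 3, s * t ^+ 2)); first by rewrite !inE eqxx orbT.
    by rewrite /dot /= xx1 xx0; field.
- have er3 : xx s t j.+3 = t * xx s t j.+2 + s ^+ 2 * xx s t j.+1 by rewrite xxSS.
  move: hg; rewrite /= !inE => /or3P [] /eqP ?; subst g.
  + apply: (LA (nth 0 (forms s t j.+3) 1)); first by rewrite mem_nth.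
    rewrite /dot /= er3; ring.
  + apply: (LA' (nth 0 (forms s t j.+3) 1)); first by rewrite mem_nth.
    rewrite /dot /= er3; ring.
  + apply: (LA' (nth 0 (forms s t j.+3) 0)); first by rewrite mem_nth.
    rewrite /dot /=; ring.
Qed.

Lemma Psi_rev (R : realFieldType) (s t : R) m u v : 0 < s ->
  Psi s t m.+1 u v <= Mx s t m u v.
Proof.
move=> hs; rewrite /Psi ge_max; apply/andP; split; apply: mx_le.
- rewrite le_max; apply/orP; left; exact: Psi_ge0.
- move=> f hf; exact: Mx_half.
- rewrite le_max; apply/orP; left; exact: Psi_ge0.
- move=> f hf; rewrite MxC; exact: Mx_half.
Qed.

Lemma Dn_x (R : realFieldType) (s t : R) j : 0 < s ->
  Dn j.+4 s t = t * s * xx s t j.+1 + s * xx s t j.+2.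
Proof.
move=> hs; have hs0 : s != 0 by rewrite gt_eqF.
suff : Dn j.+4 s t = t * s * xx s t j.+1 + s * xx s t j.+2 /\
       Dn j.+4.+1 s t = t * s * xx s t j.+2 + s * xx s t j.+3 by case.
elim: j => [|j [IH1 IH2]].
  by split; rewrite /= ?xxSS ?xx1 ?xx0; field.
split => //.
have -> : Dn j.+4.+2 s t = t * Dn j.+4.+1 s t + s ^+ 2 * Dn j.+4 s t by [].
rewrite IH1 IH2 (xxSS s t j.+2) (xxSS s t j.+1); ring.
Qed.

Lemma Psi_top (R : realFieldType) (s t : R) j : Hyp s t ->
  Psi s t j.+3 1 0 = Dn j.+4 s t.
Proof.
move=> H; have [ht hts hs2 hc] := H; have hs : 0 < s by apply: lt_le_trans hts.
rewrite Dn_x //.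
have [hp h1 h2] := xinv ht hts hs2 j.
have [hq h3 h4] := xinv ht hts hs2 j.+1.
have [hr _ _] := xinv ht hts hs2 j.+2.
set p := xx s t j in hp h1 h2 *; set q := xx s t j.+1 in hq h1 h2 h3 h4 *.
set r := xx s t j.+2 in hr h3 h4 *.
have er : r = t * q + s ^+ 2 * p by rewrite /r xxSS.
have hsp : s * q <= r.
  rewrite -(ler_pM2l hs); have := h3; have : t * r <= s * r by rewrite ler_wpM2r // ltW.
  rewrite mulrA -expr2 => a b; exact: le_trans b a.
have htp : t * p <= q.
  have hsp' : s * p <= q.
    rewrite -(ler_pM2l hs); have := h1; have : t * q <= s * q by rewrite ler_wpM2r // ltW.
    rewrite mulrA -expr2 => a b; exact: le_trans b a.
  apply: le_trans hsp'; by rewrite ler_wpM2r // ltW.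
have hD : 0 <= t * s * q + s * r by nra.
have hx : t * s * (t * p) <= t * s * q by rewrite ler_wpM2l // mulr_ge0 // ltW.
apply: le_anti; apply/andP; split.
- apply: Psi_le => // f; rewrite /= !inE => /or3P [] /eqP -> ; rewrite /dot /= !mulr1 !mulr0 ?addr0 ?add0r; split.
  all: rewrite -/p -/q -/r ?er; try nra.
- apply: (@Psi_ge_r _ _ _ _ _ _ (nth 0 (forms s t j.+3) 0)); first by rewrite mem_nth.
  rewrite /dot /= mulr0 mulr1 add0r; exact: lexx.
Qed.


Fixpoint Ef {R : realFieldType} (a : nat -> nat -> R) (s : R) (k : nat) : nat -> R :=
  match k with
  | 0 => fun _ => 1
  | k'.+1 => let f := Ef a s k' in
      fun i => if i == k'.+1 then - \sum_(j < k'.+1) s ^+ (k' - j) * a j k' * f j else f i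
  end.
Definition E {R : realFieldType} (a : nat -> nat -> R) (s : R) k := Ef a s k k.

Lemma Ef_stable (R : realFieldType) (a : nat -> nat -> R) s k i : (i <= k)%N -> Ef a s k i = E a s i.
Proof.
elim: k => [|k IH] /=; first by rewrite leqn0 => /eqP ->.
rewrite leq_eqVlt => /orP [/eqP ->|hi]; first by rewrite /E.
by rewrite ltn_eqF // IH.
Qed.

Lemma E0 (R : realFieldType) (a : nat -> nat -> R) s : E a s 0 = 1.
Proof. by []. Qed.

Lemma ES (R : realFieldType) (a : nat -> nat -> R) s k :
  E a s k.+1 = - \sum_(j < k.+1) s ^+ (k - j) * a j k * E a s j.
Proof.
rewrite /E /= eqxx; congr (- _); apply: eq_bigr => j _; rewrite Ef_stable //.
by rewrite -ltnS.
Qed.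

Lemma hess_y (R : realFieldType) n' (A : 'M[R]_n'.+1) s (P : pred R) : s != 0 -> in_Gs s P A ->
  let a := fun i j => A (inord i) (inord j) in
  let y := fun i => E a s i / s ^+ i in
  forall j : 'I_n'.+1,
  \sum_(i < n'.+1) y i * A i j = (if (j < n')%N then 0 else - s * y n'.+1).
Proof.
move=> hs hA a y j.
have C1 : forall jj, \sum_(i < jj.+1) y i * a i jj = - s * y jj.+1.
  move=> jj; rewrite /y ES.
  set X := \sum_(_ < _) s ^+ _ * _ * _.
  have -> : - s * (- X / s ^+ jj.+1) = X / s ^+ jj by rewrite exprS; field; rewrite expf_neq0.
  rewrite /X mulr_suml; apply: eq_bigr => i _.
  have e : s ^+ jj = s ^+ (jj - i) * s ^+ i by rewrite -exprD subnK // -ltnS.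
  by rewrite e; field; rewrite !expf_neq0.
have hj := ltn_ord j.
have -> : \sum_(i < n'.+1) y i * A i j = \sum_(i < n'.+1) y i * a i j.
  by apply: eq_bigr => i _; rewrite /a !inord_val.
rewrite -(big_mkord xpredT (fun i => y i * a i j)) (big_cat_nat _ (n := j.+1)) //=.
rewrite big_mkord C1.
case: ltnP => hjn.
- rewrite big_ltn //.
  have -> : a j.+1 j = s.
    by have [h _] := hA (inord j.+1) (inord j); rewrite /a h // !inordK // ltnS ltnW.
  rewrite big_nat_cond big1 ?addr0; first by rewrite mulNr mulrC addNr.
  move=> i /andP [/andP [hi1 hi2] _].
  have [_ [h _]] := hA (inord i) (inord j).
  by rewrite /a h ?mulr0 // !inordK // ltnW.
- have ej : nat_of_ord j = n' by apply/eqP; rewrite eqn_leq hjn -ltnS hj.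
  by rewrite ej big_geq ?addr0.
Qed.

Lemma det_hess (R : realFieldType) n' (A : 'M[R]_n'.+1) s (P : pred R) : s != 0 -> in_Gs s P A ->
  \det A = (-1) ^+ n'.+1 * E (fun i j => A (inord i) (inord j)) s n'.+1.
Proof.
move=> hs hA; have hy := hess_y hs hA.
set a := fun i j => _ in hy *.
set y := fun i => E a s i / s ^+ i in hy.
pose Y : 'M[R]_n'.+1 := \matrix_(i, j) (if i == ord0 then y j else (i == j)%:R).
have dY : \det Y = 1.
  rewrite -det_tr det_trig.
    rewrite big1 // => i _; rewrite !mxE; case: eqP => [->|_]; last by rewrite eqxx.
    by rewrite /y /= E0 expr0 divr1.
  apply/is_trig_mxP => i j hij; rewrite !mxE.
  case: eqP => [hj|_]; first by rewrite hj in hij.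
  by rewrite -val_eqE /= gtn_eqF.
have ZE0 : forall j, (Y *m A) ord0 j = \sum_(i < n'.+1) y i * A i j.
  by move=> j; rewrite mxE; apply: eq_bigr => i _; rewrite mxE eqxx.
have ZE : forall i j, i != ord0 -> (Y *m A) i j = A i j.
  move=> i j hi; rewrite mxE (bigD1 i) //= big1 ?addr0; first by rewrite mxE (negbTE hi) eqxx mul1r.
  by move=> k hk; rewrite mxE (negbTE hi) eq_sym (negbTE hk) mul0r.
have -> : \det A = \det (Y *m A) by rewrite det_mulmx dY mul1r.
rewrite (expand_det_row _ ord0) (bigD1 ord_max) //= big1 ?addr0.
  rewrite ZE0 hy ltnn /cofactor.
  have dM : \det (row' ord0 (col' ord_max (Y *m A))) = s ^+ n'.
    rewrite -det_tr det_trig.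
      rewrite (eq_bigr (fun _ => s)) ?prodr_const ?card_ord // => i _.
      rewrite 3!mxE ZE; last by rewrite eq_sym neq_lift.
      by have [h _] := hA (lift ord0 i) (lift ord_max i); rewrite h // lift0 lift_max.
    apply/is_trig_mxP => i j hij; rewrite 3!mxE ZE; last by rewrite eq_sym neq_lift.
    by have [_ [h _]] := hA (lift ord0 j) (lift ord_max i); rewrite h // lift0 lift_max.
  rewrite dM /y /= add0n !exprS; field; by rewrite expf_neq0.
move=> j hj; rewrite ZE0 hy.
have -> : (j < n')%N.
  by rewrite ltn_neqAle -ltnS ltn_ord andbT; move: hj; rewrite -val_eqE.
by rewrite mul0r.
Qed.


Fixpoint UV {R : realFieldType} (e : nat -> R) (s : R) (k : nat) : R * R :=
  match k with
  | 0 => (0, 0)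
  | k'.+1 => let p := UV e s k' in
      (s * p.1 + Num.max (e k') 0, s * p.2 + Num.max (- e k') 0)
  end.

Lemma sum_shift (R : realFieldType) (s : R) (c : nat -> R) k :
  \sum_(i < k.+1) s ^+ (k - i) * c i = s * \sum_(i < k) s ^+ (k.-1 - i) * c i + c k.
Proof.
rewrite big_ord_recr /= subnn expr0 mul1r; congr (_ + _).
rewrite mulr_sumr; apply: eq_bigr => i _; rewrite mulrA -exprS.
by case: k i => [[]//|k] i /=; rewrite subSn // -ltnS.
Qed.

Lemma UV_sum (R : realFieldType) (e : nat -> R) (s : R) k :
  (UV e s k).1 = \sum_(i < k) s ^+ (k.-1 - i) * Num.max (e i) 0 /\
  (UV e s k).2 = \sum_(i < k) s ^+ (k.-1 - i) * Num.max (- e i) 0.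
Proof.
elim: k => [|k [IH1 IH2]]; first by rewrite !big_ord0.
by rewrite /= (sum_shift s (fun i => Num.max (e i) 0)) (sum_shift s (fun i => Num.max (- e i) 0)) IH1 IH2.
Qed.

Lemma UV_ge0 (R : realFieldType) (e : nat -> R) (s : R) k : 0 <= s ->
  0 <= (UV e s k).1 /\ 0 <= (UV e s k).2.
Proof.
move=> hs; elim: k => [|k [h1 h2]] /=; first by rewrite lexx.
by split; apply: addr_ge0; rewrite ?mulr_ge0 // le_max lexx orbT.
Qed.

Lemma aux_b (R : realFieldType) (x a t c : R) : 0 <= x -> 0 <= a -> a <= t ->
  - (x * a * c) <= t * (x * Num.max (- c) 0).
Proof.
move=> hx ha hat.
set M := Num.max (- c) 0.
have hM : 0 <= M by rewrite le_max lexx orbT.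
have hM' : 0 <= M + c by rewrite -(opprK c) subr_ge0 le_max lexx.
have h1 : 0 <= x * ((t - a) * M) by rewrite mulr_ge0 // mulr_ge0 // subr_ge0.
have h2 : 0 <= x * (a * (M + c)) by rewrite !mulr_ge0.
rewrite -subr_ge0; have -> : t * (x * M) - - (x * a * c) = x * ((t - a) * M) + x * (a * (M + c)) by ring.
by rewrite addr_ge0.
Qed.

Lemma aux_c (R : realFieldType) (x a t c : R) : 0 <= x -> 0 <= a -> a <= t ->
  x * a * c <= t * (x * Num.max c 0).
Proof.
move=> hx ha hat.
have := @aux_b R x a t (- c) hx ha hat; by rewrite opprK mulrN opprK.
Qed.

Lemma E_bounds (R : realFieldType) (a : nat -> nat -> R) (s t : R) k :
  0 <= s -> (forall i, (i <= k)%N -> 0 <= a i k <= t) ->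
  E a s k.+1 <= t * (UV (E a s) s k.+1).2 /\ - E a s k.+1 <= t * (UV (E a s) s k.+1).1.
Proof.
move=> hs ha; have [h1 h2] := UV_sum (E a s) s k.+1; rewrite h1 h2 ES opprK /=.
rewrite !mulr_sumr -sumrN; split; apply: ler_sum => i _;
  have /andP [ha0 hat] := ha i (ltn_ord i).
- by apply: aux_b => //; rewrite exprn_ge0.
- by apply: aux_c => //; rewrite exprn_ge0.
Qed.

Lemma forms_nonneg (R : realFieldType) (s t : R) m f : Hyp s t -> f \in forms s t m ->
  0 <= f.1 /\ 0 <= f.2.
Proof.
move=> [ht hts hs2 hc]; have hs : 0 < s by apply: lt_le_trans hts.
have hs0 := ltW hs; have ht0 := ltW ht.
case: m => [|[|[|j]]] /=.
- by rewrite inE => /eqP -> /=; rewrite lexx ht0.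
- by rewrite inE => /eqP -> /=; rewrite !(mulr_ge0, exprn_ge0).
- by rewrite !inE => /orP [] /eqP -> /=; rewrite !(addr_ge0, mulr_ge0, exprn_ge0).
- have [hp _ _] := xinv ht hts hs2 j; have [hq _ _] := xinv ht hts hs2 j.+1.
  have [hr _ _] := xinv ht hts hs2 j.+2.
  have hp0 := ltW hp; have hq0 := ltW hq; have hr0 := ltW hr.
  by rewrite !inE => /or3P [] /eqP -> /=; rewrite !(addr_ge0, mulr_ge0, exprn_ge0).
Qed.

Lemma dot_mono (R : realFieldType) (f : R * R) X Y X' Y' : 0 <= f.1 -> 0 <= f.2 ->
  X <= X' -> Y <= Y' -> dot f X Y <= dot f X' Y'.
Proof. by move=> h1 h2 hX hY; rewrite /dot lerD // ler_wpM2l. Qed.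

Lemma Psi_mono (R : realFieldType) (s t : R) m X Y X' Y' : Hyp s t ->
  X <= X' -> Y <= Y' -> Psi s t m X Y <= Psi s t m X' Y'.
Proof.
move=> H hX hY; apply: Psi_le; first exact: Psi_ge0.
move=> f hf; have [h1 h2] := forms_nonneg H hf; split.
  by apply: Psi_ge_l hf _; apply: dot_mono.
by apply: Psi_ge_r hf _; apply: dot_mono.
Qed.

Lemma chain (R : realFieldType) (a : nat -> nat -> R) (s t : R) n : Hyp s t ->
  (forall i j, (i <= j)%N -> (j < n)%N -> 0 <= a i j <= t) ->
  forall m k, (0 < k)%N -> (k + m = n)%N ->
  Psi s t 0 (UV (E a s) s n).1 (UV (E a s) s n).2 <=
  Psi s t m (UV (E a s) s k).1 (UV (E a s) s k).2.
Proof.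
move=> H ha; have [ht hts _ _] := H; have hs : 0 <= s by apply: le_trans hts; apply: ltW.
elim=> [|m IH] k hk hkm; first by rewrite addn0 in hkm; rewrite hkm.
case: k hk hkm => [//|k] _ hkm.
have hk1 : (k.+2 + m = n)%N by rewrite addSnnS.
apply: le_trans (IH k.+2 isT hk1) _.
have hkn : (k < n)%N by rewrite -hkm addSn ltnS leq_addr.
have [hb1 hb2] := @E_bounds R a s t k hs (fun i hi => ha i k hi hkn).
have [hu hv] := UV_ge0 (E a s) k.+1 hs.
set u := (UV (E a s) s k.+1).1 in hb1 hb2 hu hv *.
set v := (UV (E a s) s k.+1).2 in hb1 hb2 hu hv *.
have -> : UV (E a s) s k.+2 = (s * u + Num.max (E a s k.+1) 0, s * v + Num.max (- E a s k.+1) 0) by [].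
case: (leP 0 (E a s k.+1)) => he.
- rewrite (_ : Num.max (- E a s k.+1) 0 = 0); last by apply/max_idPr; rewrite oppr_le0.
  apply: le_trans (Psi_stepA m H hu hv); apply: Psi_mono => //; first by rewrite lerD2l.
  by rewrite addr0.
- rewrite (_ : Num.max (- E a s k.+1) 0 = - E a s k.+1); last by apply/max_idPl; rewrite oppr_ge0 ltW.
  apply: le_trans (Psi_stepB m H hu hv); apply: Psi_mono => //; first by rewrite addr0.
  by rewrite lerD2l.
Qed.

Lemma E_le_Dn (R : realFieldType) (a : nat -> nat -> R) (s t : R) j : Hyp s t ->
  (forall i jj, (i <= jj)%N -> (jj < j.+4)%N -> 0 <= a i jj <= t) ->
  `|E a s j.+4| <= Dn j.+4 s t.
Proof.
move=> H ha; have [ht hts _ _] := H; have hs : 0 <= s by apply: le_trans hts; apply: ltW.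
have hch := @chain R a s t j.+4 H ha j.+3 1 isT erefl.
have e1 : UV (E a s) s 1 = (1, 0).
  rewrite /= E0 !mulr0 !add0r; congr pair.
    by apply/max_idPl; rewrite ler01.
  by apply/max_idPr; rewrite oppr_le0 ler01.
rewrite e1 /= Psi_top // in hch; apply: le_trans hch.
have [hb1 hb2] := @E_bounds R a s t j.+3 hs (fun i hi => ha i j.+3 hi (ltnSn _)).
rewrite ler_norml; apply/andP; split.
- rewrite lerNl; apply: le_trans hb2 _.
  apply: (@Psi_ge_l _ _ _ _ _ _ (t, 0)); first by rewrite inE.
  by rewrite /dot /= mul0r addr0.
- apply: le_trans hb1 _.
  apply: (@Psi_ge_r _ _ _ _ _ _ (t, 0)); first by rewrite inE.
  by rewrite /dot /= mul0r addr0.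
Qed.


Definition stp {R : realFieldType} (s t : R) (b : bool) (p : R * R) : R * R :=
  if b then (s * p.1 + t * p.2, s * p.2) else (s * p.1, s * p.2 + t * p.1).

Fixpoint runc {R : realFieldType} (s t : R) (c : nat -> bool) m p : R * R :=
  match m with 0 => p | m'.+1 => runc s t (fun i => c i.+1) m' (stp s t (c 0) p) end.

Lemma runcS (R : realFieldType) (s t : R) m : forall c p,
  runc s t c m.+1 p = stp s t (c m) (runc s t c m p).
Proof. elim: m => [//|m IH] c p; by rewrite /= -IH. Qed.

Lemma runc_ext (R : realFieldType) (s t : R) m : forall c c' p,
  (forall i, (i < m)%N -> c i = c' i) -> runc s t c m p = runc s t c' m p.
Proof.
elim: m => [//|m IH] c c' p h /=; rewrite h //; apply: IH => i hi; exact: h.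
Qed.

Lemma stp_ge0 (R : realFieldType) (s t : R) b p : 0 <= s -> 0 <= t ->
  0 <= p.1 -> 0 <= p.2 -> 0 <= (stp s t b p).1 /\ 0 <= (stp s t b p).2.
Proof.
move=> hs ht h1 h2; case: b => /=; split; by rewrite ?addr_ge0 ?mulr_ge0.
Qed.

Lemma greedy (R : realFieldType) (s t : R) : Hyp s t -> forall m p, 0 <= p.1 -> 0 <= p.2 ->
  exists c, Psi s t m p.1 p.2 <= Psi s t 0 (runc s t c m p).1 (runc s t c m p).2.
Proof.
move=> H; have [ht hts _ _] := H; have hs : 0 < s by apply: lt_le_trans hts.
elim=> [|m IH] p h1 h2; first by exists (fun _ => true).
pose b := Psi s t m (s * p.1) (s * p.2 + t * p.1) <= Psi s t m (s * p.1 + t * p.2) (s * p.2).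
have [h1' h2'] := @stp_ge0 R s t b p (ltW hs) (ltW ht) h1 h2.
have [c' hc'] := IH (stp s t b p) h1' h2'.
exists (fun i => if i is i'.+1 then c' i' else b).
apply: le_trans (@Psi_rev R s t m p.1 p.2 hs) _.
apply: le_trans _ hc'.
rewrite /Mx /b /stp /=.
case: (leP (Psi s t m (s * p.1) (s * p.2 + t * p.1)) (Psi s t m (s * p.1 + t * p.2) (s * p.2))) => hb /=.
- exact: lexx.
- exact: lexx.
Qed.

Definition ag {R : realFieldType} (t : R) (g : nat -> bool) (i j : nat) : R :=
  if g i != g j.+1 then t else 0.

Fixpoint run {R : realFieldType} (s t : R) (g : nat -> bool) k : R * R :=
  match k with 0 => (1, 0) | k'.+1 => stp s t (g k) (run s t g k') end.

Lemma run_runc (R : realFieldType) (s t : R) g k :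
  run s t g k = runc s t (fun i => g i.+1) k (1, 0).
Proof. elim: k => [//|k IH]; by rewrite runcS /= IH. Qed.

Definition Sg {R : realFieldType} (s t : R) (g : nat -> bool) (b : bool) (k : nat) : R :=
  \sum_(i < k.+1) s ^+ (k - i) * (if g i != b then E (ag t g) s i else 0).

Lemma E_ag (R : realFieldType) (s t : R) g k :
  E (ag t g) s k.+1 = - t * Sg s t g (g k.+1) k.
Proof.
rewrite ES /Sg mulNr mulr_sumr; congr (- _); apply: eq_bigr => i _.
rewrite /ag; case: ifP => _; ring.
Qed.

Lemma Sg_val (R : realFieldType) (s t : R) g : g 0 = true -> forall k,
  Sg s t g true k = - (run s t g k).2 /\ Sg s t g false k = (run s t g k).1.
Proof.
move=> g0; elim=> [|k [IH1 IH2]].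
  by rewrite /Sg !big_ord1 /= g0 E0 /= subnn expr0 !mul1r oppr0.
have rec : forall b, Sg s t g b k.+1 = s * Sg s t g b k + (if g k.+1 != b then E (ag t g) s k.+1 else 0).
  by move=> b; rewrite /Sg (sum_shift s (fun i => if g i != b then E (ag t g) s i else 0)).
rewrite !rec E_ag /= /stp.
by case: (g k.+1) => /=; rewrite IH1 IH2; split; ring.
Qed.

Lemma E_ext (R : realFieldType) (a b : nat -> nat -> R) s n :
  (forall i j, (i <= j)%N -> (j < n)%N -> a i j = b i j) ->
  forall k, (k <= n)%N -> E a s k = E b s k.
Proof.
move=> hab.
suff H : forall k, (k <= n)%N -> forall i, (i <= k)%N -> E a s i = E b s i.
  by move=> k hk; apply: H hk _ (leqnn k).
elim=> [|k IH] hk i hi; first by move: hi; rewrite leqn0 => /eqP ->; rewrite !E0.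
move: hi; rewrite leq_eqVlt => /orP [/eqP ->|hi]; last by apply: IH (ltnW hk) _ hi.
rewrite !ES; congr (- _); apply: eq_bigr => i' _.
have hi' : (i' <= k)%N by exact: (ltn_ord i').
by rewrite hab // (IH (ltnW hk)).
Qed.

Lemma runc_ge0 (R : realFieldType) (s t : R) c m : 0 <= s -> 0 <= t -> forall p,
  0 <= p.1 -> 0 <= p.2 -> 0 <= (runc s t c m p).1 /\ 0 <= (runc s t c m p).2.
Proof.
move=> hs ht; elim: m c => [|m IH] c p h1 h2 //=.
have [h1' h2'] := @stp_ge0 R s t (c 0%N) p hs ht h1 h2; exact: IH.
Qed.

Lemma upper (R : realFieldType) j (s t : R) (A : 'M[R]_j.+4) : Hyp s t ->
  in_Gs s (fun x => (0 <= x) && (x <= t)) A -> `|\det A| <= Dn j.+4 s t.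
Proof.
move=> H hA; have [ht hts _ _] := H; have hs : 0 < s by apply: lt_le_trans hts.
have hs0 : s != 0 by rewrite gt_eqF.
rewrite (det_hess hs0 hA) normrM normrX normrN1 expr1n mul1r.
apply: E_le_Dn H _ => i jj hij hjj.
have [_ [_ h3]] := hA (inord i) (inord jj).
by apply: h3; rewrite !inordK // (leq_ltn_trans hij).
Qed.

Lemma Hyp_of (R : realFieldType) (s t : R) : 0 < t -> t <= s -> s <= t * (1 + 4^-1) -> Hyp s t.
Proof.
move=> ht hts hse.
have h5 : 4 * s <= 5 * t.
  have -> : 5 * t = 4 * (t * (1 + 4^-1)) by field.
  by rewrite ler_wpM2l.
clear hse.
have hs0 : 0 <= s by apply: le_trans hts; apply: ltW.
have ht0 := ltW ht.
set d := s - t.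
have hd0 : 0 <= d by rewrite subr_ge0.
have hd : 4 * d <= t by rewrite /d; lra.
have es : s = t + d by rewrite /d; ring.
have hA : (4 * d) * (4 * d) <= t * t by apply: ler_pM; rewrite ?mulr_ge0.
have hB : t * ((4 * d) * (4 * d)) <= t * (t * t) by apply: ler_wpM2l.
have hC : d * ((4 * d) * (4 * d)) <= d * (t * t) by apply: ler_wpM2l.
have hD : t * t * (4 * d) <= t * t * t by apply: ler_wpM2l; rewrite ?mulr_ge0.
have h5' : (4 * s) * (4 * s) <= (5 * t) * (5 * t) by apply: ler_pM; rewrite ?mulr_ge0.
have hT : 0 <= t * t by rewrite mulr_ge0.
split => //.
- rewrite !expr2; move: h5' hT.
  have -> : (4 * s) * (4 * s) = 16 * (s * s) by ring.
  have -> : (5 * t) * (5 * t) = 25 * (t * t) by ring.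
  move: (s * s) (t * t) => S T; lra.
- have hW : 0 <= t * t * t by rewrite !mulr_ge0.
  rewrite es; move: hB hC hD hW.
  rewrite (mulrA t t t) (mulrC d (t * t)).
  have -> : t * ((4 * d) * (4 * d)) = 16 * (t * d * d) by ring.
  have -> : d * ((4 * d) * (4 * d)) = 16 * (d * d * d) by ring.
  have -> : t * t * (4 * d) = 4 * (t * t * d) by ring.
  have -> : t ^+ 3 - t ^+ 2 * (t + d) + 2 * t * (t + d) ^+ 2 - (t + d) ^+ 3 =
     t * t * t - t * d * d - d * d * d by ring.
  move: (t * d * d) (d * d * d) (t * t * d) (t * t * t) => X Y Z W.
  move=> *; lra.
Qed.

Theorem theorem2p8 (R : realType) (n : nat) (hn : (4 <= n)%N) :
  exists eps : R, 0 < eps /\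
    forall s t : R, 0 < t -> t <= s -> s <= t * (1 + eps) ->
      (exists A : 'M[R]_n,
          in_Gs s (fun x => (0 <= x) && (x <= t)) A /\ `|\det A| = Dn n s t) /\
      (forall A : 'M[R]_n,
          in_Gs s (fun x => (0 <= x) && (x <= t)) A -> `|\det A| <= Dn n s t).
Proof.
exists (4^-1); split; first by rewrite invr_gt0 ltr0n.
move=> s t ht hts hse.
have H := Hyp_of ht hts hse.
have hs : 0 < s by apply: lt_le_trans hts.
case: n hn => [|[|[|[|j]]]] // _.
split; last by move=> A hA; exact: upper H hA.
have [c hc] := @greedy R s t H j.+3 (1, 0) ler01 (lexx 0).
set st := runc s t c j.+3 (1, 0) in hc.
pose fin := st.1 <= st.2.
pose g k := if k == 0%N then true else if k == j.+4 then fin else c k.-1.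
pose A : 'M[R]_j.+4 := \matrix_(i, k) (if (i <= k)%N then ag t g i k
                                     else if i == k.+1 :> nat then s else 0).
have hA : in_Gs s (fun x => (0 <= x) && (x <= t)) A.
  move=> i k; rewrite !mxE; split; [|split].
  - by move=> ->; rewrite ltnn eqxx.
  - move=> hki; rewrite leqNgt (ltn_trans (ltnSn _) hki) /=.
    by rewrite gtn_eqF.
  - move=> ->; rewrite /ag; case: ifP => _; by rewrite ?lexx ?ltW.
exists A; split => //.
apply/le_anti/andP; split; first exact: upper H hA.
have hs0 : s != 0 by rewrite gt_eqF.
rewrite (det_hess hs0 hA) normrM normrX normrN1 expr1n mul1r.
have -> : E (fun i k => A (inord i) (inord k)) s j.+4 = E (ag t g) s j.+4.
  apply: (@E_ext R _ _ s j.+4) => // i k hik hk; by rewrite mxE !inordK ?hik // (leq_ltn_trans hik hk).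
have g0 : g 0%N = true by [].
have [S1 S2] := Sg_val s t g0 j.+3.
have erun : run s t g j.+3 = st.
  rewrite run_runc /st; apply: runc_ext => i0 hi.
  by rewrite /g /= ltn_eqF.
have gn : g j.+4 = fin by rewrite /g /= eqxx.
rewrite E_ag gn.
have [h1 h2] := @runc_ge0 R s t c j.+3 (ltW hs) (ltW ht) (1, 0) ler01 (lexx 0).
rewrite -/st in h1 h2.
rewrite -(Psi_top j H); apply: le_trans hc _.
apply: Psi_le; first exact: normr_ge0.
move=> f; rewrite inE => /eqP -> ; rewrite /dot /= !mul0r !addr0.
rewrite /fin; case: (leP st.1 st.2) => hf.
- rewrite S1 erun mulrN mulNr opprK ger0_norm; last by rewrite mulr_ge0 // ltW.
  split; [by apply: ler_wpM2l; [exact: ltW|] | exact: lexx].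
- rewrite S2 erun mulNr normrN ger0_norm; last by rewrite mulr_ge0 // ltW.
  split; [exact: lexx | by apply: ler_wpM2l; [exact: ltW | exact: ltW hf]].
Qed.
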